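(* Let $n\ge1$, $1\le k\le n$, and let $(I_2,I_1)$ be a $k\times k$ minor that is not reverse-admissible, with $\Gamma,\tilde\Gamma,\tilde I_1,\tilde I_2,\mathsf F$ as in the context. Then for every $\Gamma'\subset\{1,\dots,n\}\setminus(I_1\cup I_2)$ with $|\Gamma'|=|\tilde\Gamma|$, the PBW-degree of the minor $(\tilde I_2\cup\mathsf F\cup\Gamma',\ \tilde I_1\cup\mathsf F\cup\Gamma')$ is greater than or equal to the PBW-degree of $(I_2,I_1)$. In other words, each summand on the right hand side of the relation $X_{(I_2,I_1)}=\sum_{\Gamma'}(-1)^{|\Gamma'|}X_{(\tilde I_2\cup\mathsf F\cup\Gamma',\tilde I_1\cup\mathsf F\cup\Gamma')}$ has PBW-degree at least that of $X_{(I_2,I_1)}$.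
   Context: A $k\times k$ minor is a pair $(I_2,I_1)$ of subsets of $\{1,\dots,n\}$ with $|I_1|+|I_2|=k$. Put $\Gamma=I_1\cap I_2=\{\gamma_1<\dots<\gamma_t\}$, $\tilde I_1=I_1\setminus\Gamma$, $\tilde I_2=I_2\setminus\Gamma$. The minor is reverse-admissible if there is $T=\{\tau_1<\dots<\tau_t\}\subset\{1,\dots,n\}\setminus(I_1\cup I_2)$ with $\tau_i\le\gamma_i$ for all $i$. For a non-reverse-admissible minor: let $1\le h_0\le t$ be minimal such that there is a subset $\mathsf T\subset\{1,\dots,n\}\setminus(I_1\cup I_2)$ of size $t-h_0$ which is componentwise $\le(\gamma_{h_0+1},\dots,\gamma_t)$ (elements listed increasingly); choose such $\mathsf T_{h_0+1}=\{\lambda_{h_0+1}<\dots<\lambda_t\}$ maximal for the componentwise partial order; let $b\in\{h_0+1,\dots,t\}$ be maximal with $(\lambda_{h_0+1},\dots,\lambda_b)$ componentwise $\le(\gamma_{h_0},\dots,\gamma_{b-1})$, or $b=h_0$ if no such $b$ exists. Set $\tilde\Gamma=\{\gamma_{h_0},\dots,\gamma_b\}$ and $\mathsf F=\Gamma\setminus\tilde\Gamma$. The PBW-degree of a $k\times k$ minor $(I_2,I_1)$ is $\deg(I_2,I_1)=|I_2|+\#\{i\in I_1: i>k\}$; equivalently, it is the number of entries $>k$ of the increasing sequence in $\mathcal N=\{1<\dots<n<\bar n<\dots<\bar1\}$ ($\bar i=2n+1-i$) formed by $I_1\cup\{\bar i:i\in I_2\}$. In the coordinate ring of the complete symplectic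 flag variety, $X_{(I_2,I_1)}$ denotes the corresponding Plücker coordinate (up to a fixed sign convention). *)

(* Defs.v *)
(* Subsets of {1,...,n} are encoded as {set 'I_n}, where the
   ordinal i stands for the integer i+1 (see [pos]). *)
From mathcomp Require Import all_boot.
Set Implicit Arguments. Unset Strict Implicit. Unset Printing Implicit Defensive.

Definition pos n (i : 'I_n) : nat := (val i).+1.

Definition sseq n (A : {set 'I_n}) : seq nat := sort leq [seq pos i | i <- enum A].

(* componentwise <= of two increasing lists (all2 also forces equal length) *)
Definition cle (s t : seq nat) : bool := all2 leq s t.

Definition Gam n (I2 I1 : {set 'I_n}) : {set 'I_n} := I1 :&: I2.
Definition compl12 n (I2 I1 : {set 'I_n}) : {set 'I_n} := ~: (I1 :|: I2).
Definition gseq n (I2 I1 : {set 'I_n}) : seq nat := sseq (Gam I2 I1).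

Definition reverse_admissible n (I2 I1 : {set 'I_n}) : Prop :=
  exists T : {set 'I_n}, T \subset compl12 I2 I1 /\ cle (sseq T) (gseq I2 I1).

(* there is T in the complement, |T| = t-h, componentwise <= (gamma_{h+1},...,gamma_t) *)
Definition h_ok n (I2 I1 : {set 'I_n}) (h : nat) : Prop :=
  exists T : {set 'I_n}, T \subset compl12 I2 I1 /\ cle (sseq T) (drop h (gseq I2 I1)).

Definition is_h0 n (I2 I1 : {set 'I_n}) (h0 : nat) : Prop :=
  [/\ 1 <= h0 <= #|Gam I2 I1|, h_ok I2 I1 h0 &
      forall h, 1 <= h < h0 -> ~ h_ok I2 I1 h].

Definition is_Lam n (I2 I1 : {set 'I_n}) (h0 : nat) (Lam : {set 'I_n}) : Prop :=
  [/\ Lam \subset compl12 I2 I1, cle (sseq Lam) (drop h0 (gseq I2 I1)) &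
      forall T : {set 'I_n}, T \subset compl12 I2 I1 ->
        cle (sseq T) (drop h0 (gseq I2 I1)) -> cle (sseq Lam) (sseq T) -> T = Lam].

(* b in {h0+1..t} with (lambda_{h0+1},..,lambda_b) <= (gamma_{h0},..,gamma_{b-1}) *)
Definition bcond n (I2 I1 : {set 'I_n}) (h0 : nat) (Lam : {set 'I_n}) (b : nat) : bool :=
  (h0 < b <= #|Gam I2 I1|) &&
  cle (take (b - h0) (sseq Lam)) (take (b - h0) (drop h0.-1 (gseq I2 I1))).

Definition is_b n (I2 I1 : {set 'I_n}) (h0 : nat) (Lam : {set 'I_n}) (b : nat) : Prop :=
  (bcond I2 I1 h0 Lam b /\ forall b', bcond I2 I1 h0 Lam b' -> b' <= b) \/
  (b = h0 /\ forall b', ~~ bcond I2 I1 h0 Lam b').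

(* tilde Gamma = {gamma_{h0}, ..., gamma_b}: elements of Gamma of rank in [h0, b] *)
Definition tGam n (I2 I1 : {set 'I_n}) (h0 b : nat) : {set 'I_n} :=
  [set i in Gam I2 I1 | h0 <= (index (pos i) (gseq I2 I1)).+1 <= b].

Definition Fset n (I2 I1 : {set 'I_n}) (h0 b : nat) : {set 'I_n} :=
  Gam I2 I1 :\: tGam I2 I1 h0 b.

Definition pbw_deg n (k : nat) (I2 I1 : {set 'I_n}) : nat :=
  #|I2| + #|[set i in I1 | k < pos i]|.

(* Main.v *)
Require Import Defs.
From mathcomp Require Import all_boot zify.
Set Implicit Arguments. Unset Strict Implicit. Unset Printing Implicit Defensive.

Definition cnt n (A : {set 'I_n}) v := #|[set i in A | pos i <= v]|.

Lemma cnt_count n (A : {set 'I_n}) v : cnt A v = count (fun x => x <= v) (sseq A).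
Proof.
rewrite /cnt /sseq count_sort count_map -size_filter.
rewrite -(card_uniqP (filter_uniq _ (enum_uniq (mem A)))).
by apply: eq_card => i; rewrite !inE mem_filter mem_enum andbC.
Qed.

Lemma size_sseq n (A : {set 'I_n}) : size (sseq A) = #|A|.
Proof. by rewrite /sseq size_sort size_map cardE. Qed.

Lemma sorted_sseq n (A : {set 'I_n}) : sorted leq (sseq A).
Proof. exact: (sort_sorted leq_total). Qed.

Lemma sorted_nth_count (s : seq nat) r v : sorted leq s -> r < size s ->
  (nth 0 s r <= v) = (r < count (fun x => x <= v) s).
Proof.
elim: s r => [//|x s IH] r /= Hs Hr.
have Hs' : sorted leq s := path_sorted Hs.
have Hall : all (fun y => x <= y) s.
  by have := Hs; rewrite (path_sortedE leq_trans) => /andP [].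
case: r Hr => [|r] Hr /=.
  case: (leqP x v) => Hxv /=; first by [] ; rewrite add0n.
  apply/esym/negbTE; rewrite -leqNgt leqn0 -leqn0 leqNgt -has_count; apply/negP=> /hasP [y ys yv].
  by move/allP: Hall => /(_ y ys); lia.
rewrite IH //; case: (leqP x v) => Hxv //=.
have -> : count (fun x0 => x0 <= v) s = 0.
  apply/eqP; rewrite -leqn0 leqNgt -has_count; apply/negP=> /hasP [y ys yv].
  by move/allP: Hall => /(_ y ys); lia.
apply/negbTE; rewrite -leqNgt.
have : nth 0 s r \in s by apply: mem_nth.
by move/allP: Hall => H /H; lia.
Qed.

Lemma nth_sseq_cnt n (A : {set 'I_n}) r v : r < #|A| ->
  (nth 0 (sseq A) r <= v) = (r < cnt A v).
Proof.
move=> Hr; rewrite cnt_count sorted_nth_count //; first exact: sorted_sseq.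
by rewrite size_sseq.
Qed.

Lemma cle_size s t : cle s t -> size s = size t.
Proof. by elim: s t => [|x s IH] [|y t] //= /andP [_ /IH ->]. Qed.

Lemma cle_nth s t r : cle s t -> r < size s -> nth 0 s r <= nth 0 t r.
Proof.
elim: s t r => [|x s IH] [|y t] r //= /andP [Hxy H] Hr.
by case: r Hr => [|r] Hr //=; apply: IH.
Qed.

Lemma cle_of_nth s t : size s = size t -> (forall r, r < size s -> nth 0 s r <= nth 0 t r) -> cle s t.
Proof.
elim: s t => [|x s IH] [|y t] //= [Hst] H.
apply/andP; split; first exact: (H 0).
by apply: IH => // r Hr; apply: (H r.+1).
Qed.

Lemma count_split (s : seq nat) v :
  count (fun x => x <= v.+1) s = count (fun x => x <= v) s + count (pred1 v.+1) s.
Proof.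
elim: s => //= x s ->; case: (ltngtP x v.+1) => H /=; try lia.
Qed.

Lemma uniq_sseq n (A : {set 'I_n}) : uniq (sseq A).
Proof.
rewrite /sseq sort_uniq map_inj_uniq ?enum_uniq //.
by move=> i j [] /val_inj.
Qed.

Lemma cnt_step n (A : {set 'I_n}) v : cnt A v.+1 <= (cnt A v).+1.
Proof.
rewrite !cnt_count count_split.
have := count_uniq_mem v.+1 (uniq_sseq A).
case: (v.+1 \in sseq A) => -> ; lia.
Qed.

Lemma cnt0 n (A : {set 'I_n}) : cnt A 0 = 0.
Proof.
apply/eqP; rewrite cards_eq0; apply/eqP/setP => i; by rewrite !inE /pos ltn0 andbF.
Qed.

Lemma cntn n (A : {set 'I_n}) : cnt A n = #|A|.
Proof.
by apply: eq_card => i; rewrite !inE /pos ltn_ord andbT.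
Qed.

Lemma cnt_mono n (A B : {set 'I_n}) v w : A \subset B -> v <= w -> cnt A v <= cnt B w.
Proof.
move=> /subsetP AB vw; apply: subset_leq_card; apply/subsetP => i; rewrite !inE.
case/andP => /AB -> /= H; lia.
Qed.

Lemma cnt_ivt n (A : {set 'I_n}) v m : m <= cnt A v -> exists v0, cnt A v0 = m.
Proof.
elim: v m => [|v IH] m.
  by rewrite cnt0 leqn0 => /eqP ->; exists 0; rewrite cnt0.
move=> Hm; case: (leqP m (cnt A v)) => H; first exact: IH.
by exists v.+1; have := cnt_step A v; lia.
Qed.

Lemma cnt_trunc n (A : {set 'I_n}) v0 w :
  cnt [set i in A | pos i <= v0] w = cnt A (minn w v0).
Proof.
by apply: eq_card => i; rewrite !inE leq_min; case: (i \in A); case: (pos i <= w); case: (pos i <= v0).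
Qed.

Lemma hall_fail n (C : {set 'I_n}) (g : seq nat) : size g <= #|C| ->
  (forall T : {set 'I_n}, T \subset C -> ~~ cle (sseq T) g) ->
  exists2 r, r < size g & cnt C (nth 0 g r) <= r.
Proof.
move=> Hsz Hno.
have [v0 Hv0] : exists v0, cnt C v0 = size g by apply: (cnt_ivt (v := n)); rewrite cntn.
set P := fun r => cnt C (nth 0 g r) <= r.
case: (boolP (has P (iota 0 (size g)))) => [/hasP [r] | /hasPn Hn].
  by rewrite mem_iota add0n => /andP [_ Hr] HP; exists r.
exfalso.
have HT : [set i in C | pos i <= v0] \subset C by apply/subsetP => i; rewrite inE => /andP [].
move/negP: (Hno _ HT); apply.
have HcT : #|[set i in C | pos i <= v0]| = size g by rewrite -Hv0.
apply: cle_of_nth; first by rewrite size_sseq.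
move=> r; rewrite size_sseq HcT => Hr.
rewrite nth_sseq_cnt ?HcT // cnt_trunc.
have := Hn r; rewrite mem_iota add0n Hr /P => /(_ isT); rewrite -ltnNge => Hr2.
rewrite /minn; case: (ltnP (nth 0 g r) v0) => Hle //.
by rewrite Hv0.
Qed.

Lemma card_le_k n k : k <= n -> k <= #|[set i : 'I_n | pos i <= k]|.
Proof.
move=> Hk.
have Hc : #|[set widen_ord Hk i | i in 'I_k]| = k.
  rewrite card_imset ?card_ord //.

  by move=> i j /(congr1 (@nat_of_ord _)) /= /val_inj.
rewrite -{1}Hc; apply: subset_leq_card; apply/subsetP => x /imsetP [i _ ->].
by rewrite inE /pos /=.
Qed.

Lemma cnt_compl_k n k (I2 I1 : {set 'I_n}) : k <= n -> #|I1| + #|I2| = k ->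
  #|Gam I2 I1| <= cnt (compl12 I2 I1) k.
Proof.
move=> Hk Hc.
have HU : #|I1 :|: I2| + #|Gam I2 I1| = k by rewrite cardsUI.
have H1 := card_le_k Hk.
set K := [set i : 'I_n | pos i <= k] in H1.
have HD : #|K :&: (I1 :|: I2)| + #|K :\: (I1 :|: I2)| = #|K| by rewrite cardsID.
have : #|K :&: (I1 :|: I2)| <= #|I1 :|: I2| by apply: subset_leq_card; apply: subsetIr.
have -> : cnt (compl12 I2 I1) k = #|K :\: (I1 :|: I2)|.
  by apply: eq_card => i; rewrite !inE andbC.
lia.
Qed.

Theorem lemma4p20 (n k : nat) (I2 I1 : {set 'I_n}) (h0 : nat) (Lam : {set 'I_n}) (b : nat) :
  1 <= n -> 1 <= k <= n -> #|I1| + #|I2| = k ->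
  ~ reverse_admissible I2 I1 ->
  is_h0 I2 I1 h0 -> is_Lam I2 I1 h0 Lam -> is_b I2 I1 h0 Lam b ->
  forall Gam' : {set 'I_n},
    Gam' \subset compl12 I2 I1 -> #|Gam'| = #|tGam I2 I1 h0 b| ->
    pbw_deg k I2 I1 <=
    pbw_deg k ((I2 :\: Gam I2 I1) :|: Fset I2 I1 h0 b :|: Gam')
              ((I1 :\: Gam I2 I1) :|: Fset I2 I1 h0 b :|: Gam').
Proof.
move=> _ /andP [Hk1 Hkn] Hcard Hnra [/andP [Hh1 Hht] _ Hmin] [HLC HLcle _] Hb Gam' HG' HG'c.
set G := Gam I2 I1. set C := compl12 I2 I1. set t := #|G|.
have HCk : t <= cnt C k by apply: cnt_compl_k.
have HCsz : t <= #|C| by apply: (leq_trans HCk); rewrite -cntn; apply: cnt_mono.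
have Hsg : size (gseq I2 I1) = t by rewrite /gseq size_sseq.
have Hnok : forall T : {set 'I_n}, T \subset C -> ~~ cle (sseq T) (drop h0.-1 (gseq I2 I1)).
  move=> T HT; apply/negP => Hc.
  case: (leqP h0 1) => Hh0.
    have E : h0.-1 = 0 by lia.
    by apply: Hnra; exists T; rewrite E drop0 in Hc.
  by apply: (Hmin h0.-1); [lia | exists T].
have Hsd : size (drop h0.-1 (gseq I2 I1)) <= #|C| by rewrite size_drop Hsg; lia.
have [r Hr Hcr] := hall_fail Hsd Hnok.
rewrite size_drop Hsg in Hr; rewrite nth_drop in Hcr.
set j0 := h0.-1 + r in Hcr.
set v := nth 0 (gseq I2 I1) j0 in Hcr.
have Hvk : v < k.
  rewrite ltnNge; apply/negP => Hkv.
  have := cnt_mono (subxx C) Hkv; lia.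
have Hbc : forall b', bcond I2 I1 h0 Lam b' -> b' <= j0.+1.
  move=> b' /andP [/andP [Hb1 Hb2] Hc].
  rewrite leqNgt; apply/negP => Hbj.
  have Hsz := cle_size Hc.
  rewrite !size_take size_drop Hsg size_sseq in Hsz.
  have HrL : r < #|Lam|.
    move: Hsz; rewrite /minn; case: ltnP; case: ltnP; rewrite /j0 in Hbj; lia.
  have Hrp : r < b' - h0 by rewrite /j0 in Hbj; lia.
  have := cle_nth Hc; rewrite size_take size_sseq => /(_ r).
  rewrite !nth_take // nth_drop -/j0 -/v nth_sseq_cnt //.
  have -> : r < minn (b' - h0) #|Lam| by rewrite leq_min Hrp HrL.
  move=> /(_ isT) Hlt.
  have := cnt_mono HLC (leqnn v); rewrite -/C; lia.
have Hbj : b <= j0.+1.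
  case: Hb => [[/Hbc //] | [-> _]]; rewrite /j0; lia.
have Hj0t : j0 < t by rewrite /j0; lia.
have Hcv : j0 < cnt G v by rewrite -nth_sseq_cnt.
have Htg : forall i, i \in tGam I2 I1 h0 b -> (i \in G) && (pos i < k).
  move=> i; rewrite inE => /andP [HiG /andP [_ Hib]].
  rewrite HiG /=.
  have Hin : pos i \in gseq I2 I1 by rewrite /gseq /sseq mem_sort; apply: map_f; rewrite mem_enum.
  have Hidx : index (pos i) (gseq I2 I1) < t by rewrite -Hsg index_mem.
  have := nth_sseq_cnt v Hidx; rewrite -/(gseq I2 I1) nth_index //.
  have -> : index (pos i) (gseq I2 I1) < cnt G v by lia.
  move=> H; lia.
clear -Htg HG' HG'c.
rewrite /pbw_deg /Fset -/G; set TG := tGam I2 I1 h0 b in Htg HG'c *.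
set A := I2 :\: G :|: (G :\: TG).
have HGdef : forall i, (i \in G) = (i \in I1) && (i \in I2) by move=> i; rewrite /G /Gam inE.
have HC : forall i, i \in Gam' -> (i \notin I1) && (i \notin I2).
  by move=> i /(subsetP HG'); rewrite /compl12 !inE negb_or.
have H2 : #|I2| <= #|A :|: TG|.
  apply: subset_leq_card; apply/subsetP => i Hi.
  rewrite !in_setU !in_setD HGdef Hi andbT; case: (i \in TG) => //=;
  by rewrite ?andbT ?orbF; case: (i \in I1).
have H2' : #|A :&: Gam'| = 0.
  apply/eqP; rewrite cards_eq0; apply/eqP/setP => x; rewrite in_setI !in_setU !in_setD !HGdef in_set0.
  case: (boolP (x \in Gam')) => [/HC /andP [/negbTE -> /negbTE ->] | _]; by rewrite ?andbF.
have HU1 := cardsUI A TG. have HU2 := cardsUI A Gam'.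
have H1 : #|[set i in I1 | k < pos i]| <= #|[set i in I1 :\: G :|: (G :\: TG) :|: Gam' | k < pos i]|.
  apply: subset_leq_card; apply/subsetP => x; rewrite in_set => /andP [Hi Hk].
  rewrite in_set Hk andbT !in_setU !in_setD HGdef Hi /=.
  case: (boolP (x \in TG)) => [/Htg /andP [_]| _]; first lia.
  by case: (x \in I2).
lia.
Qed.
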